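(* Let $R\ge1$, $k\in\mathbb N$ and $a,b\in B^{\omega_k}_R(e)\cap\mathcal B^{\mathbb C}_{TM}$. Let $0<\varepsilon<1$ with $\|a\|_{\omega_k}+\|b\|_{\omega_k}+2\varepsilon<R$, and let $c,d\in\mathbb C^{\mathcal T_0}(\omega_k)$ with $c(\emptyset)=d(\emptyset)=0$ and $\|c\|_{\omega_k},\|d\|_{\omega_k}<\varepsilon$. Then $a+c,\,b+d\in\mathcal B^{\mathbb C}_{TM}$ and for every $\tau\in\mathcal T$ $$\big|\big((a+c)\cdot(b+d)-a\cdot b\big)(\tau)\big|\le 2\varepsilon\,\frac{(4R)^{|\tau|}}{\omega_k(\tau)}.$$
   Context: $\mathcal T$ is the set of rooted trees (at least one vertex), $\mathcal T_0=\mathcal T\cup\{\emptyset\}$, $|\tau|$ the number of vertices. $\mathrm{OST}(\tau)$ is the set of ordered subtrees (vertex subsets connected by edges of $\tau$ and containing the root if nonempty), $s_\tau$ the induced rooted tree, $\tau\setminus s$ the forest obtained by deleting $s$ and adjacent edges. $\mathcal B^{\mathbb C}_{TM}$ is the set of $a\colon\mathcal T_0\to\mathbb C$ with $a(\emptyset)=1$ and $|a(\tau)|\le CK^{|\tau|}$ for some $C,K>0$, with product $(a\cdot b)(\tau)=\sum_{s\in\mathrm{OST}(\tau)}b(s_\tau)\prod_{\theta\in\tau\setminus s}a(\theta)$ and unit $e$ ($e(\emptyset)=1$, else $0$). $\omega_k(\tau)=2^{-k|\tau|}$, $\mathbb C^{\mathcal T_0}(\omega_k)=\{a\mid\|a\|_{\omega_k}:=\sup_{\tau\in\mathcal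 T_0}|a(\tau)|\omega_k(\tau)<\infty\}$, and $B^{\omega_k}_R(x)$ is the open $R$-ball about $x$ in this Banach space. *)

(* Defs.v *)
From Stdlib Require Import Reals List Permutation ClassicalEpsilon.
Import ListNotations.
Open Scope R_scope.

Record Cx := mkC { Re : R; Im : R }.
Definition C0 : Cx := mkC 0 0.
Definition C1 : Cx := mkC 1 0.
Definition Cadd (x y : Cx) : Cx := mkC (Re x + Re y) (Im x + Im y).
Definition Copp (x : Cx) : Cx := mkC (- Re x) (- Im x).
Definition Csub (x y : Cx) : Cx := Cadd x (Copp y).
Definition Cmul (x y : Cx) : Cx :=
  mkC (Re x * Re y - Im x * Im y) (Re x * Im y + Im x * Re y).
Definition Cmod (x : Cx) : R := sqrt (Re x * Re x + Im x * Im x).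

(* Planar representatives; a rooted (non-planar) tree is an isomorphism class
   under [tiso] (permutation of children, recursively). *)
Inductive tree : Type := Node : list tree -> tree.

Inductive tiso : tree -> tree -> Prop :=
| tiso_node : forall ts vs us,
    Permutation ts vs -> Forall2 tiso vs us -> tiso (Node ts) (Node us).

(* T_0 = option tree, None = empty tree *)
Definition T0 := option tree.

Fixpoint tsize (t : tree) : nat :=
  match t with Node ts => S (fold_right (fun u n => (tsize u + n)%nat) 0%nat ts) end.

Definition osize (t : T0) : nat :=
  match t with None => 0%nat | Some u => tsize u end.

Definition opt_cons (x : option tree) (l : list tree) : list tree :=
  match x with None => l | Some y => y :: l end.

(* [cuts t] enumerates, once each, the ordered subtrees s of t as pairs
   (s_t, t \ s): s_t is None for the empty subtree, and t \ s is the forest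
   (list of trees) obtained by removing s and the adjacent edges. *)
Fixpoint cuts (t : tree) : list (option tree * list tree) :=
  match t with
  | Node ts =>
      let fix go (l : list tree) : list (list tree * list tree) :=
        match l with
        | [] => [([], [])]
        | t1 :: l' =>
            flat_map (fun p => map (fun q => (opt_cons (fst p) (fst q), snd p ++ snd q))
                                   (go l'))
                     (cuts t1)
        end in
      (None, [t]) :: map (fun p => (Some (Node (fst p)), snd p)) (go ts)
  end.

Definition respects_iso (a : T0 -> Cx) : Prop :=
  forall t u, tiso t u -> a (Some t) = a (Some u).

Definition Csum (l : list Cx) : Cx := fold_right Cadd C0 l.
Definition Cprod (l : list Cx) : Cx := fold_right Cmul C1 l.

Definition tm_prod (a b : T0 -> Cx) (t : T0) : Cx :=
  match t with
  | None => b None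
  | Some u => Csum (map (fun p => Cmul (b (fst p)) (Cprod (map (fun th => a (Some th)) (snd p))))
                        (cuts u))
  end.

Definition e_unit (t : T0) : Cx := match t with None => C1 | Some _ => C0 end.

Definition fadd (a b : T0 -> Cx) : T0 -> Cx := fun t => Cadd (a t) (b t).
Definition fsub (a b : T0 -> Cx) : T0 -> Cx := fun t => Csub (a t) (b t).

Definition in_BTM (a : T0 -> Cx) : Prop :=
  respects_iso a /\ a None = C1 /\
  exists Cc K, 0 < Cc /\ 0 < K /\ forall t, Cmod (a t) <= Cc * K ^ (osize t).

Definition omega (k : nat) (t : T0) : R := (/ 2) ^ (k * osize t).

Definition wvalues (k : nat) (a : T0 -> Cx) : R -> Prop :=
  fun x => exists t, x = Cmod (a t) * omega k t.

Definition in_wspace (k : nat) (a : T0 -> Cx) : Prop :=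
  respects_iso a /\ exists M, forall t, Cmod (a t) * omega k t <= M.

(* ||a||_{omega_k} := sup_t |a(t)| omega_k(t) (meaningful when in_wspace) *)
Definition wnorm (k : nat) (a : T0 -> Cx) : R :=
  epsilon (inhabits 0) (fun r => is_lub (wvalues k a) r).

Definition in_ball (k : nat) (Rr : R) (x a : T0 -> Cx) : Prop :=
  in_wspace k (fsub a x) /\ wnorm k (fsub a x) < Rr.

(* Main.v *)
Require Import Defs.
From Stdlib Require Import Reals Lra Lia Psatz List Permutation ClassicalEpsilon.
Import ListNotations.
Open Scope R_scope.

Lemma Cext x y : Re x = Re y -> Im x = Im y -> x = y.
Proof. destruct x, y; simpl; intros; subst; reflexivity. Qed.

Lemma sq2 x y : 0 <= x*x + y*y.
Proof. apply Rplus_le_le_0_compat; apply Rle_0_sqr. Qed.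

Lemma Cmod_ge0 x : 0 <= Cmod x.
Proof. apply sqrt_pos. Qed.

Lemma Cmod_C1 : Cmod Defs.C1 = 1.
Proof. unfold Cmod; simpl. replace (1*1+0*0) with 1 by ring. apply sqrt_1. Qed.

Lemma Cmod_C0 : Cmod Defs.C0 = 0.
Proof. unfold Cmod; simpl. replace (0*0+0*0) with 0 by ring. apply sqrt_0. Qed.

Lemma Cmod_mul x y : Cmod (Cmul x y) = Cmod x * Cmod y.
Proof.
  destruct x as [a b], y as [c d]; unfold Cmod; simpl.
  rewrite <- sqrt_mult by apply sq2. f_equal. ring.
Qed.

Lemma cauchy2 a b c d : a*c + b*d <= sqrt (a*a+b*b) * sqrt (c*c+d*d).
Proof.
  destruct (Rle_or_lt 0 (a*c+b*d)).
  - apply Rsqr_incr_0_var.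
    + rewrite Rsqr_mult, !Rsqr_sqrt by apply sq2. unfold Rsqr. pose proof (Rle_0_sqr (a*d-b*c)). unfold Rsqr in *. nra.
    + apply Rmult_le_pos; apply sqrt_pos.
  - pose proof (sqrt_pos (a*a+b*b)); pose proof (sqrt_pos (c*c+d*d)). nra.
Qed.

Lemma Cmod_add x y : Cmod (Cadd x y) <= Cmod x + Cmod y.
Proof.
  destruct x as [a b], y as [c d]; unfold Cmod; simpl.
  apply Rsqr_incr_0_var.
  - rewrite Rsqr_sqrt by apply sq2. unfold Rsqr.
    pose proof (cauchy2 a b c d).
    replace ((sqrt (a*a+b*b) + sqrt (c*c+d*d)) * (sqrt (a*a+b*b) + sqrt (c*c+d*d)))
      with (sqrt (a*a+b*b) * sqrt (a*a+b*b) + sqrt (c*c+d*d) * sqrt (c*c+d*d)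
            + 2 * (sqrt (a*a+b*b) * sqrt (c*c+d*d))) by ring.
    rewrite !sqrt_sqrt by apply sq2. nra.
  - pose proof (sqrt_pos (a*a+b*b)); pose proof (sqrt_pos (c*c+d*d)). lra.
Qed.

Fixpoint gocuts (l : list tree) : list (list tree * list tree) :=
  match l with
  | [] => [([], [])]
  | t1 :: l' =>
      flat_map (fun p => map (fun q => (opt_cons (fst p) (fst q), snd p ++ snd q))
                             (gocuts l'))
               (cuts t1)
  end.

Lemma cuts_eq ts : cuts (Node ts) =
  (None, [Node ts]) :: map (fun p => (Some (Node (fst p)), snd p)) (gocuts ts).
Proof. reflexivity. Qed.

Definition sumsize (l : list tree) : nat := fold_right (fun u n => (tsize u + n)%nat) 0%nat l.

Lemma tsize_Node ts : tsize (Node ts) = S (sumsize ts).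
Proof. reflexivity. Qed.

Lemma tree_ind' (P : tree -> Prop) :
  (forall ts, Forall P ts -> P (Node ts)) -> forall t, P t.
Proof.
  intros H. fix IH 1. intros [ts]. apply H.
  induction ts as [|t ts IHts]; constructor; [apply IH | apply IHts].
Qed.

Lemma sumsize_app l1 l2 : sumsize (l1 ++ l2) = (sumsize l1 + sumsize l2)%nat.
Proof. induction l1; simpl; lia. Qed.

Lemma sumsize_opt o l : sumsize (opt_cons o l) = (osize o + sumsize l)%nat.
Proof. destruct o; reflexivity. Qed.

Lemma tsize_pos t : (1 <= tsize t)%nat.
Proof. destruct t; simpl; lia. Qed.

Lemma len_sumsize l : (length l <= sumsize l)%nat.
Proof. induction l; simpl; [lia|]. pose proof (tsize_pos a); lia. Qed.

Lemma length_flat_map_const {A B C} (f : A -> list C) (g : A -> C -> B) (l : list A) (m : list C) :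
  length (flat_map (fun p => map (g p) m) l) = (length l * length m)%nat.
Proof. induction l; simpl; [reflexivity|]. rewrite length_app, length_map; lia. Qed.

Lemma cuts_facts t :
  (length (cuts t) <= 2 ^ tsize t)%nat /\
  forall p, In p (cuts t) -> (osize (fst p) + sumsize (snd p))%nat = tsize t.
Proof.
  induction t as [ts Hts] using tree_ind'.
  assert (G : (length (gocuts ts) <= 2 ^ sumsize ts)%nat /\
     forall q, In q (gocuts ts) -> (sumsize (fst q) + sumsize (snd q))%nat = sumsize ts).
  { induction Hts as [|t1 l' [H1 H2] _ [IH1 IH2]]; simpl.
    - split; [lia|]. intros q [<-|[]]; reflexivity.
    - split.
      + unfold gocuts; fold gocuts.
        rewrite (length_flat_map_const (fun _ => nil)).
        rewrite Nat.pow_add_r. apply Nat.mul_le_mono; assumption.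
      + intros q Hq. apply in_flat_map in Hq as [p [Hp Hq]].
        apply in_map_iff in Hq as [q' [<- Hq']]. simpl.
        rewrite sumsize_opt, sumsize_app.
        specialize (H2 p Hp). specialize (IH2 q' Hq'). lia. }
  destruct G as [G1 G2].
  rewrite cuts_eq. split.
  - simpl length. rewrite length_map. rewrite tsize_Node. simpl.
    pose proof (Nat.pow_nonzero 2 (sumsize ts)). lia.
  - intros p [<-|Hp].
    + simpl. lia.
    + apply in_map_iff in Hp as [q [<- Hq]]. cbn [fst snd osize]. rewrite !tsize_Node.
      specialize (G2 q Hq). lia.
Qed.

Lemma Csub_sum x P y Q : Csub (Cadd x P) (Cadd y Q) = Cadd (Csub x y) (Csub P Q).
Proof. apply Cext; simpl; ring. Qed.
Lemma Csub_mul x P y Q : Csub (Cmul x P) (Cmul y Q) = Cadd (Cmul (Csub x y) P) (Cmul y (Csub P Q)).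
Proof. apply Cext; simpl; ring. Qed.
Lemma Cmod_sub_same x : Cmod (Csub x x) = 0.
Proof. replace (Csub x x) with Defs.C0 by (apply Cext; simpl; ring). apply Cmod_C0. Qed.
Lemma Csub_addl x y : Csub (Cadd x y) x = y.
Proof. apply Cext; simpl; ring. Qed.
Lemma Cmod_split x y : Cmod x <= Cmod (Csub x y) + Cmod y.
Proof. replace x with (Cadd (Csub x y) y) at 1 by (apply Cext; simpl; ring). apply Cmod_add. Qed.

Lemma sum_diff {A} (f g : A -> Cx) (l : list A) M :
  (forall p, In p l -> Cmod (Csub (f p) (g p)) <= M) ->
  Cmod (Csub (Csum (map f l)) (Csum (map g l))) <= INR (length l) * M.
Proof.
  induction l as [|x l IH]; intros H.
  - simpl. rewrite Cmod_sub_same. lra.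
  - change (length (x::l)) with (S (length l)). rewrite S_INR. simpl. rewrite Csub_sum. eapply Rle_trans; [apply Cmod_add|].
    specialize (IH (fun p Hp => H p (or_intror Hp))).
    specialize (H x (or_introl eq_refl)). lra.
Qed.

Definition Rprod (l : list R) : R := fold_right Rmult 1 l.

Lemma prod_diff (F F' : tree -> Cx) (w : tree -> R) (Rr e : R) (l : list tree) :
  1 <= Rr -> 0 <= e -> (forall t, 0 <= w t) ->
  (forall t, Cmod (F t) <= Rr * w t) -> (forall t, Cmod (F' t) <= Rr * w t) ->
  (forall t, Cmod (Csub (F t) (F' t)) <= e * w t) ->
  Cmod (Cprod (map F l)) <= Rr ^ length l * Rprod (map w l) /\
  Cmod (Cprod (map F' l)) <= Rr ^ length l * Rprod (map w l) /\
  Cmod (Csub (Cprod (map F l)) (Cprod (map F' l))) <= INR (length l) * e * Rr ^ length l * Rprod (map w l).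
Proof.
  intros HR He Hw HF HF' HD.
  induction l as [|t l [IH1 [IH2 IH3]]].
  - simpl. rewrite Cmod_C1, Cmod_sub_same. lra.
  - change (length (t::l)) with (S (length l)). rewrite S_INR. simpl.
    assert (W0 : 0 <= Rprod (map w l)).
    { clear -Hw. induction l; simpl; [lra|]. apply Rmult_le_pos; auto. }
    assert (P0 : 0 <= Rr ^ length l) by (apply pow_le; lra).
    pose proof (Hw t) as wt.
    set (W := Rprod (map w l)) in *. set (P := Rr ^ length l) in *.
    rewrite !Cmod_mul.
    pose proof (Cmod_ge0 (F t)). pose proof (Cmod_ge0 (F' t)).
    pose proof (Cmod_ge0 (Cprod (map F l))). pose proof (Cmod_ge0 (Cprod (map F' l))).
    split; [|split].
    + replace (Rr * P * (w t * W)) with ((Rr * w t) * (P * W)) by ring.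
      apply Rmult_le_compat; auto.
    + replace (Rr * P * (w t * W)) with ((Rr * w t) * (P * W)) by ring.
      apply Rmult_le_compat; auto.
    + rewrite Csub_mul. eapply Rle_trans; [apply Cmod_add|]. rewrite !Cmod_mul.
      pose proof (Cmod_ge0 (Csub (F t) (F' t))).
      pose proof (Cmod_ge0 (Csub (Cprod (map F l)) (Cprod (map F' l)))).
      assert (A1 : Cmod (Csub (F t) (F' t)) * Cmod (Cprod (map F l)) <= (e * w t) * (P * W))
        by (apply Rmult_le_compat; auto).
      assert (A2 : Cmod (F' t) * Cmod (Csub (Cprod (map F l)) (Cprod (map F' l)))
                   <= (Rr * w t) * (INR (length l) * e * P * W))
        by (apply Rmult_le_compat; auto).
      assert (Z : 0 <= e * w t * P * W) by (repeat apply Rmult_le_pos; auto).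
      pose proof (pos_INR (length l)).
      set (Z' := e * w t * P * W) in *.
      assert (E1 : e * w t * (P * W) = Z') by (unfold Z'; ring).
      assert (E2 : Rr * w t * (INR (length l) * e * P * W) = INR (length l) * Rr * Z') by (unfold Z'; ring).
      assert (E3 : (INR (length l) + 1) * e * (Rr * P) * (w t * W) = (INR (length l) + 1) * Rr * Z') by (unfold Z'; ring).
      rewrite E3. rewrite E1 in A1. rewrite E2 in A2. nra.
Qed.

Lemma wnorm_spec k (a : T0 -> Cx) :
  (exists M, forall t, Cmod (a t) * omega k t <= M) ->
  forall t, Cmod (a t) * omega k t <= wnorm k a.
Proof.
  intros [M HM] t.
  assert (Hb : bound (wvalues k a)) by (exists M; intros x [u ->]; apply HM).
  assert (Hne : exists x, wvalues k a x) by (exists (Cmod (a None) * omega k None); exists None; reflexivity).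
  destruct (completeness _ Hb Hne) as [m Hm].
  assert (Hl : is_lub (wvalues k a) (wnorm k a)).
  { unfold wnorm. apply epsilon_spec. exists m; exact Hm. }
  apply (proj1 Hl). exists t; reflexivity.
Qed.

Lemma omega_pos k t : 0 < omega k t.
Proof. unfold omega. apply pow_lt. lra. Qed.

Lemma wnorm_ge0 k (a : T0 -> Cx) :
  (exists M, forall t, Cmod (a t) * omega k t <= M) -> 0 <= wnorm k a.
Proof.
  intros H. eapply Rle_trans; [|apply (wnorm_spec k a H None)].
  apply Rmult_le_pos; [apply Cmod_ge0 | left; apply omega_pos].
Qed.

Lemma ball_bounded k Rr (a : T0 -> Cx) :
  in_ball k Rr e_unit a -> exists M, forall t, Cmod (a t) * omega k t <= M.
Proof.
  intros [[_ [M HM]] _]. exists (M + 1). intros t.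
  pose proof (omega_pos k t).
  eapply Rle_trans; [apply Rmult_le_compat_r; [lra | apply (Cmod_split (a t) (e_unit t))]|].
  rewrite Rmult_plus_distr_r. specialize (HM t). unfold fsub in HM.
  assert (Cmod (e_unit t) * omega k t <= 1); [|lra].
  destruct t; simpl.
  - rewrite Cmod_C0. lra.
  - rewrite Cmod_C1. unfold omega; simpl. rewrite Nat.mul_0_r. simpl. lra.
Qed.

Lemma omega_eq k t : omega k t = ((/2)^k) ^ osize t.
Proof. unfold omega. apply pow_mult. Qed.

Lemma bnd k t (x : Cx) M : Cmod x * omega k t <= M -> Cmod x <= M * (/ ((/2)^k)) ^ osize t.
Proof.
  intros H. pose proof (omega_pos k t) as Hp.
  rewrite pow_inv, <- omega_eq.
  apply Rmult_le_reg_r with (omega k t); auto.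
  rewrite Rmult_assoc, Rinv_l by lra. lra.
Qed.

Lemma Rprod_pow g (l : list tree) : Rprod (map (fun th => g ^ tsize th) l) = g ^ sumsize l.
Proof. induction l; simpl; [reflexivity|]. rewrite IHl, pow_add. reflexivity. Qed.

Lemma mono_aux (m n : nat) Rr e G : (m <= n)%nat -> 1 <= Rr -> 0 <= e -> 0 <= G ->
  INR m * e * Rr ^ m * G <= INR n * e * Rr ^ n * G.
Proof.
  intros Hmn HR He HG.
  apply Rmult_le_compat_r; auto.
  apply Rmult_le_compat; [apply Rmult_le_pos; [apply pos_INR|auto] | apply pow_le; lra | | apply Rle_pow; auto].
  apply Rmult_le_compat_r; auto. apply le_INR; auto.
Qed.

Lemma INR_le_pow2 n : INR n <= 2 ^ n.
Proof.
  induction n; [simpl; lra|]. rewrite S_INR. simpl.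
  assert (1 <= 2 ^ n) by (apply pow_R1_Rle; lra). lra.
Qed.

Theorem lemmaB3 (Rr : R) (k : nat) (a b c d : T0 -> Cx) (eps : R) :
  1 <= Rr ->
  in_ball k Rr e_unit a -> in_BTM a ->
  in_ball k Rr e_unit b -> in_BTM b ->
  0 < eps -> eps < 1 ->
  wnorm k a + wnorm k b + 2 * eps < Rr ->
  in_wspace k c -> in_wspace k d ->
  c None = C0 -> d None = C0 ->
  wnorm k c < eps -> wnorm k d < eps ->
  in_BTM (fadd a c) /\ in_BTM (fadd b d) /\
  forall tau : tree,
    Cmod (fsub (tm_prod (fadd a c) (fadd b d)) (tm_prod a b) (Some tau))
      <= 2 * eps * (4 * Rr) ^ (tsize tau) / omega k (Some tau).
Proof.
  intros HR Ha HBa Hb HBb He0 He1 Hsum Hc Hd Hc0 Hd0 Hcn Hdn.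
  pose proof (ball_bounded _ _ _ Ha) as Ma.
  pose proof (ball_bounded _ _ _ Hb) as Mb.
  pose proof (proj2 Hc) as Mc. pose proof (proj2 Hd) as Md.
  pose proof (wnorm_ge0 _ _ Ma) as A0. pose proof (wnorm_ge0 _ _ Mb) as B0.
  set (A := wnorm k a) in *. set (B := wnorm k b) in *.
  set (g := / ((/2)^k)).
  assert (g0 : 0 < g) by (unfold g; apply Rinv_0_lt_compat, pow_lt; lra).
  assert (gp : forall n, 0 <= g ^ n) by (intros; apply pow_le; lra).
  assert (ba : forall t, Cmod (a t) <= A * g ^ osize t) by (intros; apply bnd, wnorm_spec, Ma).
  assert (bb : forall t, Cmod (b t) <= B * g ^ osize t) by (intros; apply bnd, wnorm_spec, Mb).
  assert (bc : forall t, Cmod (c t) <= eps * g ^ osize t).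
  { intros t. eapply Rle_trans; [apply bnd, wnorm_spec, Mc|].
    apply Rmult_le_compat_r; [apply gp|lra]. }
  assert (bd : forall t, Cmod (d t) <= eps * g ^ osize t).
  { intros t. eapply Rle_trans; [apply bnd, wnorm_spec, Md|].
    apply Rmult_le_compat_r; [apply gp|lra]. }
  split; [|split].
  - split; [|split].
    + intros t u Htu. unfold fadd. rewrite (proj1 HBa t u Htu), (proj1 Hc t u Htu). reflexivity.
    + unfold fadd. rewrite (proj1 (proj2 HBa)), Hc0. apply Cext; simpl; ring.
    + exists (A + eps), g. split; [lra|]. split; [lra|]. intros t. unfold fadd.
      eapply Rle_trans; [apply Cmod_add|]. specialize (ba t); specialize (bc t). lra.
  - split; [|split].
    + intros t u Htu. unfold fadd. rewrite (proj1 HBb t u Htu), (proj1 Hd t u Htu). reflexivity.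
    + unfold fadd. rewrite (proj1 (proj2 HBb)), Hd0. apply Cext; simpl; ring.
    + exists (B + eps), g. split; [lra|]. split; [lra|]. intros t. unfold fadd.
      eapply Rle_trans; [apply Cmod_add|]. specialize (bb t); specialize (bd t). lra.
  - intros tau. unfold fsub, tm_prod.
    set (n := tsize tau).
    destruct (cuts_facts tau) as [CL CS].
    eapply Rle_trans; [apply (sum_diff _ _ _ (INR n * eps * Rr ^ n * g ^ n))|].
    + intros [o f] Hp. specialize (CS _ Hp). simpl in CS |- *. fold n in CS.
      destruct (prod_diff (fun th => fadd a c (Some th)) (fun th => a (Some th))
                  (fun th => g ^ tsize th) Rr eps f HR ltac:(lra) ltac:(intros; apply gp))
        as [P1 [P2 P3]].
      * intros t. unfold fadd. eapply Rle_trans; [apply Cmod_add|].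
        specialize (ba (Some t)); specialize (bc (Some t)); simpl in *.
        pose proof (gp (tsize t)). nra.
      * intros t. specialize (ba (Some t)); simpl in *.
        pose proof (gp (tsize t)). nra.
      * intros t. unfold fadd. rewrite Csub_addl. apply (bc (Some t)).
      * rewrite Rprod_pow in P1, P2, P3.
        pose proof (len_sumsize f) as LS.
        rewrite Csub_mul. eapply Rle_trans; [apply Cmod_add|]. rewrite !Cmod_mul.
        unfold fadd at 1. rewrite Csub_addl.
        set (X := Cprod (map (fun th => fadd a c (Some th)) f)) in *.
        set (Y := Cprod (map (fun th => a (Some th)) f)) in *.
        pose proof (Cmod_ge0 X). pose proof (Cmod_ge0 (Csub X Y)).
        destruct o as [s|].
        -- simpl in CS.
           pose proof (tsize_pos s).
           assert (T1 : Cmod (d (Some s)) * Cmod X <= (eps * g ^ tsize s) * (Rr ^ length f * g ^ sumsize f))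
             by (apply Rmult_le_compat; auto using Cmod_ge0; apply (bd (Some s))).
           assert (Bs : Cmod (b (Some s)) <= Rr * g ^ tsize s).
           { eapply Rle_trans; [apply (bb (Some s))|]. simpl.
             apply Rmult_le_compat_r; [apply gp|lra]. }
           assert (T2 : Cmod (b (Some s)) * Cmod (Csub X Y) <= (Rr * g ^ tsize s) * (INR (length f) * eps * Rr ^ length f * g ^ sumsize f))
             by (apply Rmult_le_compat; auto using Cmod_ge0).
           assert (Gn : g ^ tsize s * g ^ sumsize f = g ^ n) by (rewrite <- pow_add; f_equal; unfold n in *; lia).
           eapply Rle_trans; [|apply (mono_aux (S (length f)) n Rr eps (g ^ n)); auto; try lra; unfold n in *; lia].
           rewrite S_INR. simpl pow.
           assert (Z : 0 <= eps * Rr ^ length f * g ^ n) by (repeat apply Rmult_le_pos; auto; try lra; apply pow_le; lra).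
           pose proof (pos_INR (length f)).
           set (Z' := eps * Rr ^ length f * g ^ n) in *.
           assert (E1 : eps * g ^ tsize s * (Rr ^ length f * g ^ sumsize f) = Z') by (unfold Z'; rewrite <- Gn; ring).
           assert (E2 : Rr * g ^ tsize s * (INR (length f) * eps * Rr ^ length f * g ^ sumsize f) = INR (length f) * Rr * Z') by (unfold Z'; rewrite <- Gn; ring).
           assert (E3 : (INR (length f) + 1) * eps * (Rr * Rr ^ length f) * g ^ n = (INR (length f) + 1) * Rr * Z') by (unfold Z'; ring).
           rewrite E3. rewrite E1 in T1. rewrite E2 in T2. nra.
        -- simpl in CS. rewrite Hd0, Cmod_C0, (proj1 (proj2 HBb)), Cmod_C1.
           rewrite Rmult_0_l, Rplus_0_l, Rmult_1_l.
           replace (sumsize f) with n in P3 by (unfold n in *; lia).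
           eapply Rle_trans; [apply P3|]. apply mono_aux; auto; try lra; unfold n in *; lia.
    + assert (Om : / omega k (Some tau) = g ^ n).
      { rewrite omega_eq, <- pow_inv. reflexivity. }
      unfold Rdiv. rewrite Om.
      assert (L : INR (length (cuts tau)) <= 2 ^ n).
      { apply le_INR in CL. rewrite pow_INR in CL. replace (INR 2) with 2 in CL by (simpl; ring). exact CL. }
      pose proof (INR_le_pow2 n).
      pose proof (pos_INR (length (cuts tau))). pose proof (pos_INR n).
      assert (E : 0 <= eps * Rr ^ n * g ^ n) by (repeat apply Rmult_le_pos; try lra; apply pow_le; lra).
      replace (2 * eps * (4 * Rr) ^ n * g ^ n) with (2 * (2 ^ n * (2 ^ n * (eps * Rr ^ n * g ^ n)))).
      2:{ replace 4 with (2 * 2) by ring. rewrite !Rpow_mult_distr. ring. }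
      match goal with |- INR ?l * _ <= _ =>
        assert (L' : INR l <= 2 ^ n) by exact L; pose proof (pos_INR l); generalize dependent (INR l) end.
      intros LL L' HL.
      assert (EQ : LL * (INR n * eps * Rr ^ n * g ^ n)
                  = LL * (INR n * (eps * Rr ^ n * g ^ n))) by ring.
      rewrite EQ.
      set (Z := eps * Rr ^ n * g ^ n) in *.
      assert (0 <= 2 ^ n) by (apply pow_le; lra).
      assert (INR n * Z <= 2 ^ n * Z) by (apply Rmult_le_compat_r; auto).
      assert (0 <= INR n * Z) by (apply Rmult_le_pos; auto).
      assert (LL * (INR n * Z) <= 2 ^ n * (2 ^ n * Z))
        by (apply Rmult_le_compat; auto; lra).
      assert (0 <= 2 ^ n * Z) by (apply Rmult_le_pos; auto).
      assert (0 <= 2 ^ n * (2 ^ n * Z)) by (apply Rmult_le_pos; auto).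
      lra.
Qed.
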